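(* $\mathsf{sTC}_{\mathbb{N}^\mathbb{N}} \le_{\mathrm{W}} \mathsf{FindHS}_{\boldsymbol{\Sigma}^0_1}$ and hence $\chi_{\Pi^1_1}<_{\mathrm{W}}\mathsf{FindHS}_{\boldsymbol{\Sigma}^0_1}$.
   Context: Weihrauch reducibility: $f\le_{\mathrm{W}} g$ iff there are computable $\Phi,\Psi$ on Baire space such that for every realizer $G$ of $g$, $p\mapsto\Psi(\langle p,G\Phi(p)\rangle)$ realizes $f$; $<_{\mathrm{W}}$ is strict reducibility. The Ramsey space $[\mathbb{N}]^\mathbb{N}$ is the set of strictly increasing functions $\mathbb{N}\to\mathbb{N}$ with Baire-space topology; $fg=f\circ g$. For $P\subseteq[\mathbb{N}]^\mathbb{N}$, $f$ is homogeneous for $P$ if either $fg\in P$ for all $g\in[\mathbb{N}]^\mathbb{N}$ or $fg\notin P$ for all $g$; $\mathrm{HS}(P)$ is the set of homogeneous solutions. Open sets of $[\mathbb{N}]^\mathbb{N}$ are named by enumerations of sets of finite strictly increasing strings whose cones have union the set. $\mathsf{FindHS}_{\boldsymbol{\Sigma}^0_1}$: input an open $P$ with $\mathrm{HS}(P)\cap P\ne\emptyset$, output any element of $\mathrm{HS}(P)\cap P$. $\mathsf{sTC}_{\mathbb{N}^\mathbb{N}}$: given a name (a tree on $\mathbb{N}$) of a closed $A\subseteq\mathbb{N}^\mathbb{N}$, output $(b,x)\in\{0,1\}\times\mathbb{N}^\mathbb{N}$ with ($b=0\Rightarrow A=\emptyset$) and ($b=1\Rightarrow x\in A$). $\chi_{\Pi^1_1}:\mathbb{N}^\mathbb{N}\to\{0,1\}$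 is the characteristic function of a $\Pi^1_1$-complete set (equivalently, decide whether a given tree on $\mathbb{N}$ is well-founded). *)

(* Defs.v *)
From mathcomp Require Import all_boot.
Set Implicit Arguments. Unset Strict Implicit. Unset Printing Implicit Defensive.

Definition Baire := nat -> nat.

Definition pairB (p q : Baire) : Baire :=
  fun n => if odd n then q n./2 else p n./2.

Definition seqcode (s : seq nat) : nat := CodeSeq.code s.

Definition initseg (x : Baire) (n : nat) : seq nat := mkseq x n.

(** * Computable (partial) functionals on Baire space:
    oracle mu-recursive functions (Kleene), the oracle being the input p. *)
Inductive rcode : Type :=
  | RZero
  | RSucc
  | RProj (i : nat)
  | ROracle
  | RComp (f : rcode) (gs : seq rcode)
  | RPrimRec (g h : rcode)
  | RMu (f : rcode).

Inductive reval (a : Baire) : rcode -> seq nat -> nat -> Prop :=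
  | ev_zero args : reval a RZero args 0
  | ev_succ args : reval a RSucc args (head 0 args).+1
  | ev_proj i args : reval a (RProj i) args (nth 0 args i)
  | ev_oracle args : reval a ROracle args (a (head 0 args))
  | ev_comp f gs args vs v :
      revals a gs args vs -> reval a f vs v -> reval a (RComp f gs) args v
  | ev_rec0 g h xs v : reval a g xs v -> reval a (RPrimRec g h) (0 :: xs) v
  | ev_recS g h n xs w v :
      reval a (RPrimRec g h) (n :: xs) w ->
      reval a h (n :: w :: xs) v ->
      reval a (RPrimRec g h) (n.+1 :: xs) v
  | ev_rec_nil g h v : reval a g [::] v -> reval a (RPrimRec g h) [::] v
  | ev_mu f args n :
      reval a f (n :: args) 0 ->
      (forall m, m < n -> exists k, reval a f (m :: args) k.+1) ->
      reval a (RMu f) args n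
with revals (a : Baire) : seq rcode -> seq nat -> seq nat -> Prop :=
  | evs_nil args : revals a [::] args [::]
  | evs_cons g gs args v vs :
      reval a g args v -> revals a gs args vs -> revals a (g :: gs) args (v :: vs).

Definition comp_fun (e : rcode) (p q : Baire) : Prop :=
  forall n, reval p e [:: n] (q n).

Definition problem := Baire -> Baire -> Prop.  (* f p q : q is a valid output name for input name p *)

Definition pdom (f : problem) (p : Baire) : Prop := exists q, f p q.

Definition realizes (F : Baire -> Baire) (f : problem) : Prop :=
  forall p, pdom f p -> f p (F p).

Definition weih_le (f g : problem) : Prop :=
  exists ePhi ePsi : rcode,
    forall G : Baire -> Baire, realizes G g ->
      forall p, pdom f p ->
        exists q r, comp_fun ePhi p q /\ comp_fun ePsi (pairB p (G q)) r /\ f p r.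

Definition weih_lt (f g : problem) : Prop := weih_le f g /\ ~ weih_le g f.

(** * Trees on N, named by their characteristic functions (via seqcode) *)
Definition in_tree (p : Baire) (s : seq nat) : Prop := p (seqcode s) = 1.

Definition tree_name (p : Baire) : Prop :=
  (forall n, p n <= 1) /\
  (forall s t, in_tree p (s ++ t) -> in_tree p s).

Definition in_body (p : Baire) (x : Baire) : Prop :=
  forall n, in_tree p (initseg x n).

(** sTC_{N^N}: output (b,x) named by q with q 0 = b and x = tail of q *)
Definition tailB (q : Baire) : Baire := fun n => q n.+1.

Definition sTC_NN : problem := fun p q =>
  tree_name p /\ q 0 <= 1 /\
  (q 0 = 0 -> forall x, ~ in_body p x) /\
  (q 0 = 1 -> in_body p (tailB q)).

Definition wellfounded_tree (p : Baire) : Prop := forall x, ~ in_body p x.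

Definition chi_Pi11 : problem := fun p q =>
  tree_name p /\ (q 0 = 1 <-> wellfounded_tree p) /\ (q 0 = 0 <-> ~ wellfounded_tree p).

Definition strinc (f : Baire) : Prop := forall n, f n < f n.+1.

(** open subsets of [N]^N, named by enumerations of sets of finite strictly
    increasing strings: p n = seqcode s + 1 enumerates s, p n = 0 enumerates nothing *)
Definition enumerated (p : Baire) (s : seq nat) : Prop := exists n, p n = (seqcode s).+1.

Definition open_name (p : Baire) : Prop :=
  forall s, enumerated p s -> sorted ltn s.

Definition in_open (p : Baire) (f : Baire) : Prop :=
  strinc f /\ exists s, enumerated p s /\ s = initseg f (size s).

Definition homogeneous (P : Baire -> Prop) (f : Baire) : Prop :=
  strinc f /\
  ((forall g, strinc g -> P (f \o g)) \/ (forall g, strinc g -> ~ P (f \o g))).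

Definition FindHS_Sigma01 : problem := fun p q =>
  open_name p /\ (exists h, homogeneous (in_open p) h /\ in_open p h) /\
  homogeneous (in_open p) q /\ in_open p q.

(* Main.v *)
Require Import Defs.
From mathcomp Require Import all_boot.
From Stdlib Require Import Classical ClassicalEpsilon.
Set Implicit Arguments. Unset Strict Implicit. Unset Printing Implicit Defensive.

Fixpoint den (a : Baire) (e : rcode) (args : seq nat) {struct e} : nat :=
  match e with
  | RZero => 0
  | RSucc => (head 0 args).+1
  | RProj i => nth 0 args i
  | ROracle => a (head 0 args)
  | RComp f gs => den a f (map (fun g => den a g args) gs)
  | RPrimRec g h =>
      match args with
      | [::] => den a g [::]
      | n :: xs => nat_rec (fun _ => nat) (den a g xs) (fun k w => den a h [:: k, w & xs]) n
      end
  | RMu _ => 0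
  end.

Fixpoint mfree (e : rcode) : bool :=
  match e with
  | RComp f gs => mfree f && (fix mfl l := match l with [::] => true | g :: l' => mfree g && mfl l' end) gs
  | RPrimRec g h => mfree g && mfree h
  | RMu _ => false
  | _ => true
  end.

Lemma den_ok a : forall e args, mfree e -> reval a e args (den a e args).
Proof.
fix IH 1 => e args; case: e => [| |i||f gs|g h|f] /=.
- by move=> _; constructor.
- by move=> _; constructor.
- by move=> _; constructor.
- by move=> _; constructor.
- case/andP=> Hf Hgs. apply: ev_comp; last exact: IH.
  move: Hgs; elim: gs => [|g gs IHgs] /=; first by move=> _; constructor.
  case/andP=> Hg Hgs; constructor; [exact: IH | exact: IHgs].
- case/andP=> Hg Hh; case: args => [|n xs] /=; first by constructor; exact: IH.
  elim: n => [|n IHn] /=; first by constructor; exact: IH.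
  apply: ev_recS; first exact: IHn. exact: IH.
- by [].
Qed.

Definition agree (a a' : Baire) N := forall i, i < N -> a' i = a i.

Lemma agree_mono a a' N M : M <= N -> agree a a' N -> agree a a' M.
Proof. by move=> HMN H i Hi; apply: H; apply: leq_trans HMN. Qed.

Fixpoint use_r a e args v (H : reval a e args v) {struct H} :
  exists N, forall a', agree a a' N -> reval a' e args v
with use_rs a gs args vs (H : revals a gs args vs) {struct H} :
  exists N, forall a', agree a a' N -> revals a' gs args vs.
Proof.
- case: H => {e args v}.
  + by move=> args; exists 0 => a' _; constructor.
  + by move=> args; exists 0 => a' _; constructor.
  + by move=> i args; exists 0 => a' _; constructor.
  + move=> args; exists (head 0 args).+1 => a' Ha.
    rewrite -(Ha (head 0 args)) //; constructor.
  + move=> f gs args vs v Hs Hf.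
    case: (use_rs _ _ _ _ Hs) => N1 H1; case: (use_r _ _ _ _ Hf) => N2 H2.
    exists (maxn N1 N2) => a' Ha; apply: ev_comp.
    * apply: H1; apply: agree_mono Ha; exact: leq_maxl.
    * apply: H2; apply: agree_mono Ha; exact: leq_maxr.
  + move=> g h xs v Hg; case: (use_r _ _ _ _ Hg) => N HN; exists N => a' Ha.
    by constructor; apply: HN.
  + move=> g h n xs w v H1 H2.
    case: (use_r _ _ _ _ H1) => N1 HN1; case: (use_r _ _ _ _ H2) => N2 HN2.
    exists (maxn N1 N2) => a' Ha; apply: ev_recS.
    * apply: HN1; apply: agree_mono Ha; exact: leq_maxl.
    * apply: HN2; apply: agree_mono Ha; exact: leq_maxr.
  + move=> g h v Hg; case: (use_r _ _ _ _ Hg) => N HN; exists N => a' Ha.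
    by constructor; apply: HN.
  + move=> f args n H0 Hlt.
    case: (use_r _ _ _ _ H0) => N0 HN0.
    have : forall n', n' <= n -> exists N, forall a', agree a a' N ->
        forall m, m < n' -> exists k, reval a' f (m :: args) k.+1.
      elim=> [|n' IHn'] Hn'; first by exists 0 => a' _ m.
      case: (IHn' (ltnW Hn')) => N1 HN1.
      case: (Hlt n' Hn') => k Hk.
      case: (use_r _ _ _ _ Hk) => N2 HN2.
      exists (maxn N1 N2) => a' Ha m; rewrite ltnS leq_eqVlt; case/orP.
      * move/eqP=> ->; exists k; apply: HN2; apply: agree_mono Ha; exact: leq_maxr.
      * move=> Hm; apply: HN1 => //; apply: agree_mono Ha; exact: leq_maxl.
    case/(_ n (leqnn n)) => N1 HN1.
    exists (maxn N0 N1) => a' Ha; apply: ev_mu.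
    * apply: HN0; apply: agree_mono Ha; exact: leq_maxl.
    * apply: HN1; apply: agree_mono Ha; exact: leq_maxr.
- case: H => {gs args vs}.
  + by move=> args; exists 0 => a' _; constructor.
  + move=> g gs args v vs Hg Hgs.
    case: (use_r _ _ _ _ Hg) => N1 H1; case: (use_rs _ _ _ _ Hgs) => N2 H2.
    exists (maxn N1 N2) => a' Ha; constructor.
    * apply: H1; apply: agree_mono Ha; exact: leq_maxl.
    * apply: H2; apply: agree_mono Ha; exact: leq_maxr.
Qed.

Fixpoint det_r a e args v (H : reval a e args v) {struct H} :
  forall v', reval a e args v' -> v = v'
with det_rs a gs args vs (H : revals a gs args vs) {struct H} :
  forall vs', revals a gs args vs' -> vs = vs'.
Proof.
- case: H => {e args v}.
  + by move=> args v' H; inversion H.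
  + by move=> args v' H; inversion H.
  + by move=> i args v' H; inversion H.
  + by move=> args v' H; inversion H.
  + move=> f gs args vs v Hs Hf v' H; inversion H; subst.
    have E := det_rs _ _ _ _ Hs _ H2; subst.
    exact: (det_r _ _ _ _ Hf).
  + move=> g h xs v Hg v' H; inversion H; subst. exact: (det_r _ _ _ _ Hg).
  + move=> g h n xs w v H1 H2 v' H; inversion H; subst.
    match goal with Hx : reval a (RPrimRec g h) (n :: xs) _ |- _ => have E := det_r _ _ _ _ H1 _ Hx end; subst. by apply: (det_r _ _ _ _ H2).
  + move=> g h v Hg v' H; inversion H; subst. exact: (det_r _ _ _ _ Hg).
  + move=> f args n H0 Hlt v' H; inversion H; subst.
    case: (ltngtP n v') => // Hc.
    * case: (H3 _ Hc) => k Hk; by have := det_r _ _ _ _ H0 _ Hk.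
    * case: (Hlt _ Hc) => k Hk; by have := det_r _ _ _ _ Hk _ H2.
- case: H => {gs args vs}.
  + by move=> args vs' H; inversion H.
  + move=> g gs args v vs Hg Hgs vs' H; inversion H; subst.
    match goal with H3 : reval a g args _, H5 : revals a gs args _ |- _ =>
    by rewrite (det_r _ _ _ _ Hg _ H3) (det_rs _ _ _ _ Hgs _ H5) end.
Qed.

Notation P := RProj.
Definition C1 f g := RComp f [:: g].
Definition C2 f g h := RComp f [:: g; h].
Definition ITE3 := RPrimRec (P 1) (P 2).
Definition ite b x y := RComp ITE3 [:: b; x; y].
Definition onep := locked (C1 RSucc RZero).

Lemma den_C1 a f g args : den a (C1 f g) args = den a f [:: den a g args].
Proof. by []. Qed.
Lemma den_C2 a f g h args : den a (C2 f g h) args = den a f [:: den a g args; den a h args].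
Proof. by []. Qed.
Lemma den_ite a b x y args :
  den a (ite b x y) args = if den a b args is 0 then den a y args else den a x args.
Proof. by rewrite /= ; case: (den a b args). Qed.
Lemma den_rec0 a g h xs : den a (RPrimRec g h) (0 :: xs) = den a g xs.
Proof. by []. Qed.
Lemma den_recS a g h n xs : den a (RPrimRec g h) (n.+1 :: xs) =
  den a h [:: n, den a (RPrimRec g h) (n :: xs) & xs].
Proof. by []. Qed.
Lemma nth0 (x : nat) l : nth 0 (x :: l) 0 = x. Proof. by []. Qed.
Lemma nth1 (x y : nat) l : nth 0 [:: x, y & l] 1 = y. Proof. by []. Qed.
Lemma nth2 (x y z : nat) l : nth 0 [:: x, y, z & l] 2 = z. Proof. by []. Qed.
Lemma nth3 (x y z u : nat) l : nth 0 [:: x, y, z, u & l] 3 = u. Proof. by []. Qed.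
Lemma den_one a args : den a onep args = 1. Proof. by rewrite /onep -lock. Qed.
Lemma den_P a i args : den a (P i) args = nth 0 args i. Proof. by []. Qed.
Lemma den_Z a args : den a RZero args = 0. Proof. by []. Qed.
Lemma den_S a args : den a RSucc args = (head 0 args).+1. Proof. by []. Qed.
Lemma den_O a args : den a ROracle args = a (head 0 args). Proof. by []. Qed.
Lemma den_comp a f gs args : den a (RComp f gs) args = den a f (map (fun g => den a g args) gs).
Proof. by []. Qed.

Arguments den : simpl never.

Definition AND b c := ite b c RZero.
Definition OR b c := ite b onep c.
Lemma den_AND a b c args (x y : bool) : den a b args = x -> den a c args = y ->
  den a (AND b c) args = (x && y).
Proof. by rewrite /AND den_ite => -> ->; case: x. Qed.
Lemma den_OR a b c args (x y : bool) : den a b args = x -> den a c args = y ->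
  den a (OR b c) args = (x || y).
Proof. by rewrite /OR den_ite den_one => -> ->; case: x. Qed.

Definition nsgp := locked (RPrimRec onep RZero).
Lemma den_nsg a x : den a nsgp [:: x] = (x == 0).
Proof. rewrite /nsgp -lock; case: x => [|x]; by rewrite ?den_rec0 ?den_recS ?den_one. Qed.
Definition sgp := locked (C1 nsgp nsgp).
Lemma den_sg a x : den a sgp [:: x] = (x != 0).
Proof. by rewrite /sgp -lock den_C1 den_nsg den_nsg; case: x. Qed.
Definition parityp := locked (RPrimRec RZero (C1 nsgp (P 1))).
Lemma den_parity a x : den a parityp [:: x] = odd x.
Proof.
rewrite /parityp -lock; elim: x => [|x IH]; rewrite ?den_rec0 ?den_recS //.
by rewrite den_C1 den_P nth1 IH den_nsg /=; case: (odd x).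
Qed.
Definition addp := locked (RPrimRec (P 0) (C1 RSucc (P 1))).
Lemma den_add a x y : den a addp [:: x; y] = x + y.
Proof.
rewrite /addp -lock; elim: x => [|x IH]; rewrite ?den_rec0 ?den_recS //.
by rewrite den_C1 den_P nth1 IH den_S.
Qed.
Definition halfp := locked (RPrimRec RZero (C2 addp (P 1) (C1 parityp (P 0)))).
Lemma den_half a x : den a halfp [:: x] = x./2.
Proof.
rewrite /halfp -lock; elim: x => [|x IH]; rewrite ?den_rec0 ?den_recS //.
rewrite den_C2 den_C1 !den_P nth0 nth1 IH den_add den_parity.
by rewrite -[x.+1./2]/(uphalf x) uphalf_half addnC.
Qed.
Definition predp := locked (RPrimRec RZero (P 0)).
Lemma den_pred a x : den a predp [:: x] = x.-1.
Proof. rewrite /predp -lock; case: x => [|x]; by rewrite ?den_rec0 ?den_recS. Qed.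
Definition subrp := locked (RPrimRec (P 0) (C1 predp (P 1))).
Lemma den_subr a y x : den a subrp [:: y; x] = x - y.
Proof.
rewrite /subrp -lock; elim: y => [|y IH]; rewrite ?den_rec0 ?den_recS ?subn0 //.
by rewrite den_C1 den_P nth1 IH den_pred subnS.
Qed.
Definition ltp := locked (C1 sgp (C2 subrp (P 0) (P 1))).
Lemma den_ltp a x y : den a ltp [:: x; y] = (x < y).
Proof. by rewrite /ltp -lock den_C1 den_C2 !den_P nth0 nth1 den_subr den_sg subn_eq0 -ltnNge. Qed.
Definition lep := locked (C1 nsgp (C2 subrp (P 1) (P 0))).
Lemma den_lep a x y : den a lep [:: x; y] = (x <= y).
Proof. by rewrite /lep -lock den_C1 den_C2 !den_P nth0 nth1 den_subr den_nsg subn_eq0. Qed.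
Definition eqp := locked (AND lep (C2 lep (P 1) (P 0))).
Lemma den_eqp a x y : den a eqp [:: x; y] = (x == y).
Proof. rewrite /eqp -lock (den_AND (x:= x <= y) (y := y <= x)) ?eqn_leq //.
  exact: den_lep. by rewrite den_C2 !den_P nth0 nth1 den_lep. Qed.
Definition Hp := locked (RPrimRec (P 0) (C1 halfp (P 1))).
Lemma den_Hp a j c : den a Hp [:: j; c] = iter j half c.
Proof.
rewrite /Hp -lock; elim: j => [|j IH]; rewrite ?den_rec0 ?den_recS //.
by rewrite den_C1 den_P nth1 IH den_half iterS.
Qed.


Fixpoint bmN (k c : nat) : nat :=
  if k is k'.+1 then (if bmN k' c < k' then bmN k' c else if odd (iter k' half c) then k' else k'.+1)
  else 0.

Definition BM := locked (RPrimRec RZero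
  (ite (C2 ltp (P 1) (P 0)) (P 1) (ite (C1 parityp (C2 Hp (P 0) (P 2))) (P 0) (C1 RSucc (P 0))))).
Lemma den_BM a k c : den a BM [:: k; c] = bmN k c.
Proof.
rewrite /BM -lock; elim: k => [|k IH]; first by rewrite den_rec0.
rewrite den_recS IH /= den_ite den_C2 !den_P nth0 nth1 den_ltp.
case: ifP => _ //; rewrite den_ite den_C1 den_C2 !den_P nth0 nth2 den_Hp den_parity.
by case: ifP => _ //; rewrite den_C1 den_P nth0 den_S.
Qed.

Lemma bmN_none k c : (forall j, j < k -> ~~ odd (iter j half c)) -> bmN k c = k.
Proof.
elim: k => // k IH H /=; rewrite IH ?ltnn; last by move=> j Hj; apply: H; apply: ltnW.
by rewrite (negbTE (H k (ltnSn k))).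
Qed.

Lemma bmN_some k c m : (forall j, j < m -> ~~ odd (iter j half c)) -> odd (iter m half c) ->
  m < k -> bmN k c = m.
Proof.
move=> Hj Hm; elim: k => // k IH; rewrite ltnS leq_eqVlt; case/orP.
- move/eqP=> <- /=; by rewrite bmN_none // ltnn Hm.
- move=> Hmk /=; by rewrite IH // Hmk.
Qed.

Definition hdp := locked (C2 BM (P 0) (P 0)).
Definition hdN c := bmN c c.
Lemma den_hd a c : den a hdp [:: c] = hdN c.
Proof. by rewrite /hdp -lock den_C2 !den_P nth0 den_BM. Qed.
Definition tlp := locked (C1 halfp (C1 predp (C2 Hp (C1 hdp (P 0)) (P 0)))).
Definition tlN c := (iter (hdN c) half c).-1./2.
Lemma den_tl a c : den a tlp [:: c] = tlN c.
Proof. by rewrite /tlp -lock !den_C1 den_C2 den_C1 !den_P nth0 den_hd den_Hp den_pred den_half. Qed.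
Definition TLp := locked (RPrimRec (P 0) (C1 tlp (P 1))).
Definition TLN k c := iter k tlN c.
Lemma den_TL a k c : den a TLp [:: k; c] = TLN k c.
Proof.
rewrite /TLp -lock; elim: k => [|k IH]; first by rewrite den_rec0.
by rewrite den_recS den_C1 den_P nth1 IH den_tl /TLN iterS.
Qed.

Notation code := CodeSeq.code.
Lemma code_cons x s : code (x :: s) = 2 ^ x * (code s).*2.+1.
Proof. by []. Qed.


Lemma iter_half_exp j i m : iter j half (2 ^ (j + i) * m) = 2 ^ i * m.
Proof.
elim: j i => // j IH i; rewrite iterSr addSn expnS -mulnA mul2n.
by rewrite -[_.*2./2]/(half (_.*2)) doubleK IH.
Qed.

Lemma hdN_code x s : hdN (code (x :: s)) = x.
Proof.
rewrite /hdN; apply: bmN_some.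
- move=> j Hj; rewrite code_cons (_ : x = j + (x - j).-1.+1); last first.
    by rewrite prednK ?subn_gt0 // subnKC // ltnW.
  by rewrite iter_half_exp expnS -mulnA mul2n odd_double.
- by rewrite code_cons -{2}[x]addn0 iter_half_exp expn0 mul1n /= odd_double.
- rewrite code_cons; apply: (leq_trans (ltn_expl x (ltnSn 1))).
  by rewrite -{1}[2 ^ x]muln1 leq_mul2l ltnS leq0n orbT.
Qed.

Lemma tlN_code x s : tlN (code (x :: s)) = code s.
Proof.
rewrite /tlN hdN_code code_cons -{2}[x]addn0 iter_half_exp expn0 mul1n /=.
by rewrite -[_.*2./2]/(half (_.*2)) doubleK.
Qed.

Lemma tlN0 : tlN 0 = 0.
Proof. by []. Qed.

Lemma TLN_code k s : TLN k (code s) = code (drop k s).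
Proof.
elim: k => [|k IH]; first by rewrite drop0.
rewrite /TLN iterS -/(TLN k _) IH -add1n -drop_drop.
by case: (drop k s) => [|x t] //; rewrite tlN_code /= drop0.
Qed.

Lemma code0 s : (code s == 0) = (s == [::]).
Proof. case: s => // x s; rewrite code_cons muln_eq0 expn_eq0 /=. by []. Qed.

Lemma size_code s : size s <= code s.
Proof.
elim: s => // x s IH; rewrite code_cons /=.
have h1 : (code s).*2.+1 <= 2^x * (code s).*2.+1 by apply: leq_pmull; rewrite expn_gt0.
by apply: leq_trans h1; rewrite ltnS -addnn (leq_trans IH) // leq_addr.
Qed.

Lemma code_decode n : code (CodeSeq.decode n) = n.
Proof. exact: CodeSeq.decodeK. Qed.

Fixpoint allb (Q : nat -> bool) k := if k is k'.+1 then allb Q k' && Q k' else true.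
Fixpoint exb (Q : nat -> bool) k := if k is k'.+1 then exb Q k' || Q k' else false.
Lemma allbP (Q : nat -> bool) k : reflect (forall j, j < k -> Q j) (allb Q k).
Proof.
elim: k => [|k IH] /=; first by apply: ReflectT.
apply: (iffP andP) => [[/IH H1 H2] j|H]; last first.
  by split; [apply/IH => j Hj; apply: H; apply: ltnW | apply: H].
by rewrite ltnS leq_eqVlt; case/orP => [/eqP -> //|]; apply: H1.
Qed.
Lemma exbP (Q : nat -> bool) k : reflect (exists2 j, j < k & Q j) (exb Q k).
Proof.
elim: k => [|k IH] /=; first by apply: ReflectF => -[].
apply: (iffP orP) => [[/IH [j H1 H2]|H]|[j]]; first by exists j => //; apply: ltnW.
  by exists k.
by rewrite ltnS leq_eqVlt; case/orP => [/eqP -> ->|Hj Hq]; [right|left; apply/IH; exists j].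
Qed.

Definition FA1 body := RPrimRec onep (AND (P 1) (RComp body [:: P 0; P 2])).
Definition FA2 body := RPrimRec onep (AND (P 1) (RComp body [:: P 0; P 2; P 3])).
Definition EX1 body := RPrimRec RZero (OR (P 1) (RComp body [:: P 0; P 2])).

Lemma den_FA1 a body (Q : nat -> bool) x k : (forall j, den a body [:: j; x] = Q j) ->
  den a (FA1 body) [:: k; x] = allb Q k.
Proof.
move=> H; elim: k => [|k IH]; first by rewrite /FA1 den_rec0 den_one.
rewrite /FA1 den_recS -/(FA1 body) /= (den_AND (x := allb Q k) (y := Q k)) //.
by rewrite -H.
Qed.
Lemma den_FA2 a body (Q : nat -> bool) x y k : (forall j, den a body [:: j; x; y] = Q j) ->
  den a (FA2 body) [:: k; x; y] = allb Q k.
Proof.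
move=> H; elim: k => [|k IH]; first by rewrite /FA2 den_rec0 den_one.
rewrite /FA2 den_recS -/(FA2 body) /= (den_AND (x := allb Q k) (y := Q k)) //.
by rewrite -H.
Qed.
Lemma den_EX1 a body (Q : nat -> bool) x k : (forall j, den a body [:: j; x] = Q j) ->
  den a (EX1 body) [:: k; x] = exb Q k.
Proof.
move=> H; elim: k => [|k IH]; first by rewrite /EX1 den_rec0.
rewrite /EX1 den_recS -/(EX1 body) /= (den_OR (x := exb Q k) (y := Q k)) //.
by rewrite -H.
Qed.


Definition twop := locked (C1 RSucc onep).
Lemma den_two a args : den a twop args = 2. Proof. by rewrite /twop -lock den_C1 den_one den_S. Qed.

Lemma eqn_bool (b1 b2 : bool) : ((b1 : nat) == b2) = (b1 == b2).
Proof. by case: b1; case: b2. Qed.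

Definition bodyPre := ite (C1 sgp (C2 TLp (P 0) (P 1)))
  (AND (C1 sgp (C2 TLp (P 0) (P 2))) (C2 eqp (C1 hdp (C2 TLp (P 0) (P 1))) (C1 hdp (C2 TLp (P 0) (P 2)))))
  onep.
Definition preQ c0 c1 k := (TLN k c0 != 0) ==> ((TLN k c1 != 0) && (hdN (TLN k c0) == hdN (TLN k c1))).
Definition prefp := locked (RComp (FA2 bodyPre) [:: C1 RSucc (P 0); P 0; P 1]).
Definition preB c0 c1 := allb (preQ c0 c1) c0.+1.
Lemma den_pref a c0 c1 : den a prefp [:: c0; c1] = preB c0 c1.
Proof.
rewrite /prefp -lock den_comp /= den_C1 !den_P nth0 nth1 den_S /= /preB.
apply: den_FA2 => j; rewrite /bodyPre den_ite !den_C1 !den_C2 !den_P nth0 nth1 den_TL.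
rewrite den_sg /preQ; case: (TLN j c0 != 0) => /=; last by rewrite den_one.
rewrite (den_AND (x := TLN j c1 != 0) (y := hdN (TLN j c0) == hdN (TLN j c1))) //.
  by rewrite den_C1 den_C2 !den_P nth0 nth2 den_TL den_sg.
by rewrite den_C2 !den_C1 !den_C2 !den_P nth0 nth1 nth2 !den_TL !den_hd den_eqp.
Qed.

Lemma den_AND' a b c args : den a (AND b c) args = if den a b args is 0 then 0 else den a c args.
Proof. by rewrite /AND den_ite den_Z. Qed.
Lemma den_OR' a b c args : den a (OR b c) args = if den a b args is 0 then den a c args else 1.
Proof. by rewrite /OR den_ite den_one. Qed.
Lemma natb_match (b : bool) (x y : nat) : (if (b : nat) is 0 then x else y) = if b then y else x.
Proof. by case: b. Qed.

Lemma ifb_imp (b c : bool) : (if b then (c:nat) else 1) = ((b ==> c) : nat).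
Proof. by case: b. Qed.
Lemma ifb_and (b c : bool) : (if b then (c:nat) else 0) = ((b && c) : nat).
Proof. by case: b. Qed.
Lemma ifb_or (b c : bool) : (if b then 1 else (c:nat)) = ((b || c) : nat).
Proof. by case: b. Qed.
Lemma ifb_succ (b : bool) (x : nat) : (if b then x.+1 else 0) = (if b then x.+1 else 0).
Proof. by []. Qed.

Ltac dsimp := repeat progress (rewrite ?den_ite ?den_AND' ?den_OR' ?den_C1 ?den_C2 ?den_P ?nth0 ?nth1 ?nth2 ?nth3
  ?den_S ?den_O ?den_Z ?den_one ?den_two ?den_TL ?den_hd ?den_tl ?den_half ?den_parity ?den_sg ?den_nsg
  ?den_eqp ?den_ltp ?den_lep ?den_pref ?natb_match ?ifb_imp ?ifb_and ?ifb_or ?eqn_bool).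

Definition bodySort := ite (C1 sgp (C2 TLp (C1 RSucc (P 0)) (P 1)))
  (C2 ltp (C1 hdp (C2 TLp (P 0) (P 1))) (C1 hdp (C2 TLp (C1 RSucc (P 0)) (P 1)))) onep.
Definition sortQ n k := (TLN k.+1 n != 0) ==> (hdN (TLN k n) < hdN (TLN k.+1 n)).
Definition sortp := locked (RComp (FA1 bodySort) [:: P 0; P 0]).
Definition sortB n := allb (sortQ n) n.
Lemma den_sort a n : den a sortp [:: n] = sortB n.
Proof.
rewrite /sortp -lock den_comp /= !den_P nth0 /sortB; apply: den_FA1 => j.
by rewrite /bodySort /sortQ; dsimp.
Qed.

Definition bodyPw := AND (C2 eqp (C1 nsgp (C2 TLp (P 0) (P 1))) (C1 nsgp (C2 TLp (P 0) (P 2))))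
  (ite (C1 sgp (C2 TLp (P 0) (P 2))) (C2 lep (C1 hdp (C2 TLp (P 0) (P 1))) (C1 hdp (C2 TLp (P 0) (P 2)))) onep).
Definition pwQ c t k := ((TLN k c == 0) == (TLN k t == 0)) && ((TLN k t != 0) ==> (hdN (TLN k c) <= hdN (TLN k t))).
Definition pwp := locked (RComp (FA2 bodyPw) [:: C1 RSucc (P 1); P 0; P 1]).
Definition pwB c t := allb (pwQ c t) t.+1.
Lemma den_pw a c t : den a pwp [:: c; t] = pwB c t.
Proof.
rewrite /pwp -lock den_comp /= den_C1 !den_P nth0 nth1 den_S /= /pwB; apply: den_FA2 => j.
by rewrite /bodyPw /pwQ; dsimp.
Qed.

Definition bodyBad := AND (C2 eqp (C1 ROracle (P 0)) onep) (C2 pwp (P 0) (P 1)).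
Definition badp := locked (RComp (EX1 bodyBad) [:: C1 RSucc (P 0); P 0]).
Definition badB (a : Baire) t := exb (fun c => (a c == 1) && pwB c t) t.+1.
Lemma den_bad a t : den a badp [:: t] = badB a t.
Proof.
rewrite /badp -lock den_comp /= den_C1 !den_P nth0 den_S /= /badB; apply: den_EX1 => j.
by rewrite /bodyBad; dsimp; rewrite den_pw; dsimp.
Qed.

Lemma headc (x : nat) l : head 0 (x :: l) = x. Proof. by []. Qed.
Lemma natb_eq0 (b : bool) : ((b : nat) == 0) = ~~ b. Proof. by case: b. Qed.
Ltac dsimp2 := repeat progress (dsimp; rewrite ?den_sort ?den_bad ?den_add ?den_pred ?headc ?natb_eq0).


Definition y0p := C1 hdp (P 0).
Definition y1p := C1 hdp (C1 tlp (P 0)).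
Definition isPair := AND (C1 nsgp (C2 TLp twop (P 0))) (C1 sgp (C2 TLp onep (P 0))).
Definition cond1 := AND isPair (AND (C2 ltp y0p y1p) (AND (C1 parityp y0p) (AND (C1 parityp y1p)
  (AND (C2 prefp (C1 halfp y0p) (C1 halfp y1p)) (AND (C1 nsgp (C2 eqp (C1 halfp y0p) (C1 halfp y1p)))
   (C2 eqp (C1 ROracle (C1 halfp y1p)) onep)))))).
Definition cond0 := AND (C1 sgp (P 0)) (AND (C1 sortp (P 0)) (AND (C1 nsgp (C1 parityp y0p))
  (C1 nsgp (C1 badp (C1 tlp (P 0)))))).
Definition Phip := ite (OR cond1 cond0) (C1 RSucc (P 0)) RZero.

Definition c1B (p : Baire) n := let y0 := hdN n in let y1 := hdN (tlN n) in
  [&& TLN 2 n == 0, TLN 1 n != 0, y0 < y1, odd y0, odd y1, preB y0./2 y1./2, y0./2 != y1./2 & p y1./2 == 1].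
Definition c0B (p : Baire) n := [&& n != 0, sortB n, ~~ odd (hdN n) & ~~ badB p (tlN n)].
Definition PhiN p n := if c1B p n || c0B p n then n.+1 else 0.

Lemma den_Phi p n : den p Phip [:: n] = PhiN p n.
Proof.
rewrite /Phip /cond1 /cond0 /isPair /y0p /y1p; dsimp2.
rewrite /PhiN /c1B /c0B -!andbA.
by case: (TLN 2 n == 0); case: (TLN 1 n != 0).
Qed.

Definition fof X := C1 ROracle (C1 RSucc (C2 addp X X)).
Definition Psip := ite (P 0) (C1 hdp (C2 TLp (C1 predp (P 0)) (C1 halfp (fof (P 0))))) (C1 parityp (fof RZero)).
Definition PsiN (a : Baire) m := if m is 0 then (odd (a 1) : nat) else hdN (TLN m.-1 (a (m + m).+1)./2).
Lemma den_Psi a m : den a Psip [:: m] = PsiN a m.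
Proof. rewrite /Psip /fof; dsimp2. by case: m. Qed.
Definition Psic := C1 nsgp (C1 parityp (fof RZero)).
Lemma den_Psic a m : den a Psic [:: m] = ~~ odd (a 1).
Proof. rewrite /Psic /fof; dsimp2. by case: (odd (a 1)). Qed.

Ltac unl := repeat progress (cbv delta [Phip cond1 cond0 isPair y0p y1p prefp sortp badp pwp twop hdp tlp TLp BM
  nsgp sgp parityp addp halfp predp subrp ltp lep eqp Hp onep Psip Psic fof bodyPre bodySort bodyPw bodyBad FA1 FA2 EX1 AND OR ite C1 C2 ITE3] beta; rewrite -?lock).
Lemma mfree_Phi : mfree Phip.
Proof. by unl. Qed.
Lemma mfree_Psi : mfree Psip.
Proof. by unl. Qed.
Lemma mfree_Psic : mfree Psic.
Proof. by unl. Qed.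

Lemma TLN_ne s k : (TLN k (code s) != 0) = (k < size s).
Proof. by rewrite TLN_code code0 -size_eq0 size_drop subn_eq0 -ltnNge. Qed.
Lemma TLN_eq0 s k : (TLN k (code s) == 0) = (size s <= k).
Proof. by rewrite leqNgt -TLN_ne negbK. Qed.
Lemma hd_TLN s k : k < size s -> hdN (TLN k (code s)) = nth 0 s k.
Proof. by move=> Hk; rewrite TLN_code (drop_nth 0 Hk) hdN_code. Qed.
Lemma tlN_s s : tlN (code s) = code (behead s).
Proof. by case: s => // x s; rewrite tlN_code. Qed.
Lemma hdN_s s : hdN (code s) = nth 0 s 0.
Proof. by case: s => // x s; rewrite hdN_code. Qed.

Lemma preB_spec s0 s1 : preB (code s0) (code s1) = (take (size s0) s1 == s0).
Proof.
apply/idP/idP.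
- move/allbP=> H; apply/eqP.
  have Hk : forall k, k < size s0 -> (k < size s1) && (nth 0 s0 k == nth 0 s1 k).
    move=> k Hk; have := H k; rewrite /preQ TLN_ne Hk TLN_ne /=.
    rewrite ltnS (leq_trans (ltnW Hk) (size_code s0)) => /(_ isT) /andP [H1 H2].
    by rewrite H1 -!hd_TLN.
  have Hsz : size s0 <= size s1.
    case: (size s0) Hk => // m Hm; by case/andP: (Hm m (ltnSn m)).
  apply: (@eq_from_nth _ 0); first by rewrite size_take_min; apply/minn_idPl.
  move=> i; rewrite size_take_min => Hi; have Hi' : i < size s0 by move: Hi; rewrite (minn_idPl Hsz).
  rewrite nth_take //; by case/andP: (Hk i Hi') => _ /eqP.
- move/eqP=> E; apply/allbP => k _; rewrite /preQ TLN_ne; apply/implyP => Hk.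
  have Hk1 : k < size s1.
    by apply: (leq_trans Hk); rewrite -E size_take_min geq_minr.
  rewrite TLN_ne Hk1 /= !hd_TLN // -{1}E nth_take //.
Qed.

Lemma code_mono t u : size t = size u -> (forall i, i < size t -> nth 0 t i <= nth 0 u i) ->
  code t <= code u.
Proof.
elim: t u => [|x t IH] [|y u] // Hs' H.
have Hs : size t = size u by case: Hs'.
rewrite !code_cons; apply: leq_mul; first by rewrite leq_exp2l //; apply: (H 0).
rewrite ltnS leq_double; apply: IH => // i Hi; exact: (H i.+1).
Qed.

Lemma pwB_spec tau t : pwB (code tau) (code t) <->
  (size tau = size t /\ forall i, i < size t -> nth 0 tau i <= nth 0 t i).
Proof.
split.
- move/allbP=> H.
  have Hs : size tau = size t.
    apply/eqP; rewrite eqn_leq; apply/andP; split.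
    + rewrite leqNgt; apply/negP => Hlt.
      have := H (size t); rewrite ltnS size_code => /(_ isT) /andP [/eqP].
      by rewrite !TLN_eq0 leqnn leqNgt Hlt.
    + rewrite leqNgt; apply/negP => Hlt.
      have := H (size tau); rewrite ltnS (leq_trans (ltnW Hlt) (size_code t)) => /(_ isT) /andP [/eqP].
      by rewrite !TLN_eq0 leqnn leqNgt Hlt.
  split => // i Hi; have := H i; rewrite ltnS (leq_trans (ltnW Hi) (size_code t)) => /(_ isT) /andP [_].
  by rewrite TLN_ne Hi /= !hd_TLN // Hs.
- case=> Hs Hle; apply/allbP => k _; rewrite /pwQ !TLN_eq0 Hs eqxx /= -ltnNge.
  by apply/implyP => Hk; rewrite !hd_TLN ?Hs //; apply: Hle.
Qed.

Definition dominated (p : Baire) (t : seq nat) :=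
  exists tau, in_tree p tau /\ size tau = size t /\ forall i, i < size t -> nth 0 tau i <= nth 0 t i.

Lemma badB_spec p t : badB p (code t) <-> dominated p t.
Proof.
split.
- case/exbP => c _ /andP [/eqP Hc Hpw].
  exists (CodeSeq.decode c); move: Hpw; rewrite -{1}(code_decode c) => /pwB_spec [Hs Hle].
  by split => //; rewrite /in_tree /seqcode code_decode.
- case=> tau [Ht [Hs Hle]]; apply/exbP; exists (code tau).
  + by rewrite ltnS; apply: code_mono => // i; rewrite Hs; exact: Hle.
  + by move: Ht; rewrite /in_tree /seqcode => ->; rewrite eqxx /=; apply/pwB_spec.
Qed.

Lemma sortB_spec s : sortB (code s) = (sorted ltn s).
Proof.
have E : sortB (code s) <-> (forall k, k.+1 < size s -> nth 0 s k < nth 0 s k.+1).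
  split.
  - move/allbP=> H k Hk.
    have Hb : k < code s by apply: leq_trans (size_code s); exact: ltnW.
    have := H k Hb; rewrite /sortQ TLN_ne Hk implyTb !hd_TLN //; exact: ltnW.
  - move=> H; apply/allbP => k _; rewrite /sortQ TLN_ne; apply/implyP => Hk.
    by rewrite !hd_TLN //; [apply: H | apply: ltnW].
apply/idP/idP.
- move/E; elim: s {E} => // x [|y s] IH //= H.
  apply/andP; split; first by apply: (H 0).
  by apply: IH => k Hk; apply: (H k.+1).
- move=> Hs; apply/E => k Hk.
  by apply: (sorted_ltn_nth ltn_trans) => //; rewrite inE ?ltnS // ltnW.
Qed.

Lemma tree_take p s k : tree_name p -> in_tree p s -> in_tree p (take k s).
Proof. by case=> _ H Hs; apply: (H _ (drop k s)); rewrite cat_take_drop. Qed.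

Definition bnd (y : Baire) (s : seq nat) := forall i, i < size s -> nth 0 s i <= y i.
Definition ext p y (tau : seq nat) m := exists sigma, in_tree p sigma /\ size sigma = size tau + m /\
  take (size tau) sigma = tau /\ bnd y sigma.
Definition good p y tau := forall m, ext p y tau m.

Lemma bnd_take y s k : bnd y s -> bnd y (take k s).
Proof.
move=> H i Hi; rewrite nth_take; last by move: Hi; rewrite size_take_min leq_min => /andP [].
by apply: H; move: Hi; rewrite size_take_min leq_min => /andP [].
Qed.

Lemma ext_mono p y tau m m' : tree_name p -> m <= m' -> ext p y tau m' -> ext p y tau m.
Proof.
move=> Hp Hm [s [Hs [Hsz [Ht Hb]]]]; exists (take (size tau + m) s); split; first exact: tree_take.
split; first by rewrite size_takel // Hsz leq_add2l.
split; last exact: bnd_take.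
by rewrite take_takel ?leq_addr.
Qed.

Lemma good_child p y tau : tree_name p -> good p y tau -> exists v, good p y (rcons tau v).
Proof.
move=> Hp Hg; apply: NNPP => Hn.
have Hv : forall v, exists m, ~ ext p y (rcons tau v) m.
  move=> v; apply: NNPP => Hc; apply: Hn; exists v => m; apply: NNPP => Hc2; apply: Hc; by exists m.
have HM : forall b, exists M, forall v, v <= b -> ~ ext p y (rcons tau v) M.
  elim=> [|b [M HM]].
  - case: (Hv 0) => m Hm; exists m => v; rewrite leqn0 => /eqP ->; exact: Hm.
  - case: (Hv b.+1) => m Hm; exists (maxn M m) => v; rewrite leq_eqVlt; case/orP.
    + move/eqP=> -> He; apply: Hm; apply: ext_mono He => //; exact: leq_maxr.
    + rewrite ltnS => Hvb He; apply: (HM v Hvb); apply: ext_mono He => //; exact: leq_maxl.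
case: (HM (y (size tau))) => M HMv.
case: (Hg M.+1) => s [Hs [Hsz [Ht Hb]]].
have Hlt : size tau < size s by rewrite Hsz addnS ltnS leq_addr.
apply: (HMv (nth 0 s (size tau))); first by apply: Hb.
exists s; split => //; split; first by rewrite size_rcons Hsz addnS addSn.
split => //; rewrite size_rcons.
by rewrite (take_nth 0 Hlt) Ht.
Qed.

Lemma konig p y : tree_name p ->
  (forall n, exists tau, in_tree p tau /\ size tau = n /\ forall i, i < n -> nth 0 tau i <= y i) ->
  exists x, in_body p x.
Proof.
move=> Hp H.
have Hg0 : good p y [::].
  move=> m; case: (H m) => tau [Ht [Hs Hb]]; exists tau; split => //; split => //.
  by split; [rewrite take0 | move=> i; rewrite Hs; apply: Hb].
have Hstep : forall tau, exists v, good p y tau -> good p y (rcons tau v).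
  move=> tau; case: (classic (good p y tau)) => Hg.
  - by case: (good_child Hp Hg) => v Hv; exists v.
  - by exists 0.
pose step := fun tau => proj1_sig (constructive_indefinite_description _ (Hstep tau)).
have Hst : forall tau, good p y tau -> good p y (rcons tau (step tau)).
  by move=> tau; rewrite /step; case: (constructive_indefinite_description _ _).
pose pre := fix pre n := if n is n'.+1 then rcons (pre n') (step (pre n')) else [::].
exists (fun n => step (pre n)).
have Hpre : forall n, pre n = initseg (fun n => step (pre n)) n.
  elim=> // n IH; by rewrite /initseg mkseqS -/(initseg _ n) -IH.
have Hgood : forall n, good p y (pre n) by elim=> // n IH; apply: Hst.
move=> n; rewrite -Hpre; case: (Hgood n 0) => s [Hs [Hsz [Ht _]]].
by rewrite -Ht -{1}(addn0 (size (pre n))) -Hsz take_size.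
Qed.

Notation dec := CodeSeq.decode.

Lemma code_inj : injective (fun s : seq nat => code s).
Proof. exact: (can_inj CodeSeq.codeK). Qed.
Lemma dec_inj : injective dec.
Proof. exact: (can_inj CodeSeq.decodeK). Qed.

Lemma c1B_fwd p s : c1B p (code s) -> exists y0 y1, s = [:: y0; y1] /\ y0 < y1 /\ odd y0 /\ odd y1 /\
  take (size (dec y0./2)) (dec y1./2) = dec y0./2 /\ dec y0./2 <> dec y1./2 /\ in_tree p (dec y1./2).
Proof.
rewrite /c1B TLN_eq0 TLN_ne tlN_s !hdN_s.
case: s => [|y0 [|y1 [|y2 s]]] //=; case/andP => H1; case/andP => H2; case/andP => H3; case/andP => H4; case/andP => H5 /eqP H6.
exists y0, y1; do 4 split => //.
split; first by move: H4; rewrite -{1}(code_decode y0./2) -{1}(code_decode y1./2) preB_spec => /eqP.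
split; first by move=> E; move: H5; rewrite -(code_decode y0./2) E code_decode eqxx.
by rewrite /in_tree /seqcode code_decode.
Qed.

Lemma c1B_bwd p y0 y1 : y0 < y1 -> odd y0 -> odd y1 ->
  take (size (dec y0./2)) (dec y1./2) = dec y0./2 -> dec y0./2 <> dec y1./2 -> in_tree p (dec y1./2) ->
  c1B p (code [:: y0; y1]).
Proof.
move=> H1 H2 H3 H4 H5 H6; rewrite /c1B TLN_eq0 TLN_ne tlN_s !hdN_s /= H1 H2 H3 /=.
apply/and3P; split.
- by rewrite -{1}(code_decode y0./2) -{1}(code_decode y1./2) preB_spec H4.
- by apply/eqP => E; apply: H5; rewrite E.
- by move: H6; rewrite /in_tree /seqcode code_decode => ->.
Qed.

Lemma c0B_spec p s : c0B p (code s) <-> exists y0 t, s = y0 :: t /\ sorted ltn s /\ ~~ odd y0 /\ ~ dominated p t.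
Proof.
rewrite /c0B sortB_spec tlN_s hdN_s code0; split.
- case: s => [|y0 t] //=; case/and3P => H1 H2 H3; exists y0, t; do 3 split => //.
  by move=> Hd; move/negP: H3; apply; apply/badB_spec.
- case=> y0 [t [-> [H1 [H2 H3]]]] /=; rewrite -[path _ _ _]/(sorted ltn (y0 :: t)) H1 H2 /=; apply/negP => Hb; apply: H3; exact/badB_spec.
Qed.

Lemma enum_Phi p s : enumerated (PhiN p) s <-> c1B p (code s) || c0B p (code s).
Proof.
split.
- case=> n; rewrite /PhiN; case: ifP => // H [E]; move: H; by rewrite E /seqcode.
- by move=> H; exists (code s); rewrite /PhiN H.
Qed.

Lemma open_Phi p : open_name (PhiN p).
Proof.
move=> s /enum_Phi /orP [/c1B_fwd [y0 [y1 [-> [H _]]]]|/c0B_spec [y0 [t [_ [H _]]]]] //=.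
by rewrite H.
Qed.

Lemma in_open_ext q f f' : (forall n, f n = f' n) -> in_open q f -> in_open q f'.
Proof.
move=> E [Hs [s [H1 H2]]]; split; first by move=> n; rewrite -!E.
exists s; split => //; rewrite {1}H2 /initseg; apply: eq_mkseq => n; exact: E.
Qed.

Lemma strinc_lt f i j : strinc f -> i < j -> f i < f j.
Proof.
move=> Hf; elim: j => // j IH; rewrite ltnS leq_eqVlt; case/orP => [/eqP ->|H]; first exact: Hf.
exact: ltn_trans (IH H) (Hf j).
Qed.
Lemma strinc_ge f n : strinc f -> n <= f n.
Proof. move=> Hf; elim: n => // n IH; exact: leq_ltn_trans IH (Hf n). Qed.
Lemma strinc_comp f g : strinc f -> strinc g -> strinc (f \o g).
Proof. by move=> Hf Hg n /=; apply: strinc_lt. Qed.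

Lemma homog_all q f : homogeneous (in_open q) f -> in_open q f -> forall g, strinc g -> in_open q (f \o g).
Proof.
case=> Hf [H|H] Hin //; exfalso; apply: (H id) => //.
Qed.

Lemma halfS_double n : (n.*2.+1)./2 = n.
Proof. exact: uphalf_double. Qed.

Lemma code_cat_lt s t : t != [::] -> code s < code (s ++ t).
Proof.
elim: s => [|x s IH] Ht; first by rewrite cat0s lt0n code0.
rewrite cat_cons !code_cons ltn_pmul2l ?expn_gt0 // ltnS ltn_double; exact: IH Ht.
Qed.

Lemma take_initseg x m n : m <= n -> take m (initseg x n) = initseg x m.
Proof. by move=> H; rewrite /initseg /mkseq -map_take take_iota (minn_idPl H). Qed.
Lemma size_initseg x n : size (initseg x n) = n.
Proof. exact: size_mkseq. Qed.
Lemma initseg_cons f n : initseg f n.+1 = f 0 :: initseg (fun i => f i.+1) n.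
Proof.
rewrite /initseg /mkseq /=; congr cons; rewrite -[1]/(1 + 0) iotaDl -map_comp.
by apply: eq_map => i /=; rewrite add1n.
Qed.
Lemma sorted_initseg f n : strinc f -> sorted ltn (initseg f n).
Proof.
move=> Hf; rewrite /initseg /mkseq sorted_map; apply: sub_sorted (iota_ltn_sorted 0 n).
by move=> i j Hij /=; apply: strinc_lt.
Qed.

Lemma exists_sol p : tree_name p -> exists h, homogeneous (in_open (PhiN p)) h /\ in_open (PhiN p) h.
Proof.
move=> Hp; have Hgen : forall h, homogeneous (in_open (PhiN p)) h -> (forall g, strinc g -> in_open (PhiN p) (h \o g)) ->
    exists h, homogeneous (in_open (PhiN p)) h /\ in_open (PhiN p) h.
  move=> h Hh Hall; exists h; split => //; apply: in_open_ext (Hall id (fun n => ltnSn n)) => n //.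
case: (classic (exists x, in_body p x)) => [[x Hx]|Hn].
- pose h n := (code (initseg x n)).*2.+1.
  have Hh : strinc h.
    move=> n; rewrite /h ltnS ltn_double /initseg mkseqS -cats1; exact: code_cat_lt.
  have Hall : forall g, strinc g -> in_open (PhiN p) (h \o g).
    move=> g Hg; split; first exact: strinc_comp.
    exists [:: h (g 0); h (g 1)]; split => //; apply/enum_Phi; apply/orP; left.
    have Hg01 : g 0 < g 1 := Hg 0.
    apply: c1B_bwd; first exact: strinc_lt Hh Hg01.
    + by rewrite /h /= odd_double.
    + by rewrite /h /= odd_double.
    + by rewrite /h !halfS_double !CodeSeq.codeK size_initseg take_initseg // ltnW.
    + rewrite /h !halfS_double !CodeSeq.codeK.
      by move=> E; move: (congr1 size E); rewrite !size_initseg => E'; move: Hg01; rewrite E' ltnn.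
    + by rewrite /h !halfS_double !CodeSeq.codeK; exact: Hx.
  apply: (Hgen h) => //; split => //; by left.
- pose h n := n.*2.
  have Hh : strinc h by move=> n; rewrite /h ltn_double.
  have Hall : forall g, strinc g -> in_open (PhiN p) (h \o g).
    move=> g Hg; have HY := strinc_comp Hh Hg; split => //.
    have [n Hnd] : exists n, ~ dominated p (initseg (fun i => (h \o g) i.+1) n).
      apply: NNPP => Hc; apply: Hn; apply: (@konig p (fun i => (h \o g) i.+1) Hp) => n.
      have : dominated p (initseg (fun i => (h \o g) i.+1) n).
        by apply: NNPP => Hd; apply: Hc; exists n.
      case=> tau [Ht [Hs Hle]]; exists tau; split => //; rewrite size_initseg in Hs Hle; split => //.
      by move=> i Hi; move: (Hle i Hi); rewrite /initseg nth_mkseq.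
    exists (initseg (h \o g) n.+1); split; last by rewrite size_initseg.
    apply/enum_Phi; apply/orP; right; apply/c0B_spec.
    exists ((h \o g) 0), (initseg (fun i => (h \o g) i.+1) n); split; first exact: initseg_cons.
    split; first exact: sorted_initseg.
    by split => //; rewrite /= /h odd_double.
  apply: (Hgen h) => //; split => //; by left.
Qed.

Lemma enum_cases p s : enumerated (PhiN p) s ->
  (exists y0 y1, s = [:: y0; y1] /\ y0 < y1 /\ odd y0 /\ odd y1 /\
     take (size (dec y0./2)) (dec y1./2) = dec y0./2 /\ dec y0./2 <> dec y1./2 /\ in_tree p (dec y1./2))
  \/ (exists y0 t, s = y0 :: t /\ sorted ltn s /\ ~~ odd y0 /\ ~ dominated p t).
Proof. by move/enum_Phi/orP => [/c1B_fwd H|/c0B_spec H]; [left|right]. Qed.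

Lemma core p f : tree_name p -> homogeneous (in_open (PhiN p)) f -> in_open (PhiN p) f ->
  (odd (f 0) -> (forall n, n < size (dec (f n.+1)./2)) /\ in_body p (fun n => nth 0 (dec (f n.+1)./2) n)) /\
  (~~ odd (f 0) -> forall x, ~ in_body p x).
Proof.
move=> Hp Hh Hin; have Hall := homog_all Hh Hin; have Hf : strinc f by case: Hh.
pose sg k := dec (f k)./2.
have pairP : forall i j, i < j -> ~~ odd (f i) \/ (odd (f i) /\ odd (f j) /\
    take (size (sg i)) (sg j) = sg i /\ sg i <> sg j /\ in_tree p (sg j)).
  move=> i j Hij; pose g k := if k is k'.+1 then j + k' else i.
  have Hg : strinc g by case=> [|k] /=; rewrite ?addn0 ?addnS.
  case: (Hall g Hg) => _ [s [Hs Es]].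
  case: (enum_cases Hs) => [[y0 [y1 [Es' [H1 [H2 [H3 [H4 [H5 H6]]]]]]]]|[y0 [t [Es' [_ [H2 _]]]]]].
  - move: Es; rewrite Es' /= /initseg /mkseq /= addn0 => -[E0 E1]; right.
    by rewrite /sg -E0 -E1.
  - move: Es; rewrite Es' /= /initseg /mkseq /= => -[E0 _]; left; by rewrite -E0.
split.
- move=> Hodd.
  have Hodd_all : forall j, odd (f j).
    case=> // j; case: (pairP 0 j.+1 isT) => [|[_ [H _]]] //; by rewrite Hodd.
  have Hch : forall i j, i < j -> take (size (sg i)) (sg j) = sg i /\ sg i <> sg j /\ in_tree p (sg j).
    move=> i j Hij; case: (pairP i j Hij) => [|[_ [_ H]]] //; by rewrite Hodd_all.
  have Hsz : forall j, j <= size (sg j).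
    elim=> // j IH; case: (Hch j j.+1 (ltnSn j)) => Ht [Hne _].
    have Hle : size (sg j) <= size (sg j.+1) by rewrite -{1}Ht size_take_min geq_minr.
    apply: leq_ltn_trans IH _; rewrite ltn_neqAle Hle andbT; apply/eqP => E; apply: Hne.
    by rewrite -Ht E take_size.
  have Hnth : forall i j k, i <= j -> k < size (sg i) -> nth 0 (sg j) k = nth 0 (sg i) k.
    move=> i j k; rewrite leq_eqVlt; case/orP => [/eqP -> //|Hij Hk].
    case: (Hch i j Hij) => Ht _; by rewrite -Ht nth_take.
  split; first by move=> n; exact: Hsz n.+1.
  move=> n; have -> : initseg (fun n => nth 0 (dec (f n.+1)./2) n) n = take n (sg n.+1).
    apply: (@eq_from_nth _ 0); first by rewrite size_initseg size_takel // ltnW // Hsz.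
    move=> k; rewrite size_initseg => Hk; rewrite /initseg nth_mkseq // nth_take //.
    rewrite (Hnth k.+1 n.+1 k) //; try exact: ltnW; exact: (leq_trans (ltnSn k) (Hsz k.+1)).
  apply: tree_take => //; by case: (Hch 0 n.+1 isT) => _ [].
- move=> Hev x Hx.
  pose g := fix g k := if k is k'.+1 then maxn (g k').+1 (x k') else 0.
  have Hg : strinc g by move=> k /=; rewrite leq_maxl.
  case: (Hall g Hg) => _ [s [Hs Es]].
  case: (enum_cases Hs) => [[y0 [y1 [Es' [H1 [H2 _]]]]]|[y0 [t [Es' [_ [H2 Hnd]]]]]].
  - move: Es; rewrite Es' /= /initseg /mkseq /= => -[E0 _]; move: Hev; by rewrite -E0 H2.
  - apply: Hnd; move: Es; rewrite Es' /= initseg_cons => -[_ Et].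
    exists (initseg x (size t)); split; first exact: Hx.
    split; first by rewrite size_initseg.
    move=> i Hi; have -> : nth 0 t i = f (g i.+1) by rewrite {1}Et /initseg nth_mkseq.
    rewrite /initseg nth_mkseq //.
    apply: leq_trans (strinc_ge _ Hf) => /=; exact: leq_maxr.
Qed.

Lemma pairB_odd p f m : pairB p f (m + m).+1 = f m.
Proof. by rewrite /pairB addnn /= odd_double /= uphalf_double. Qed.

Lemma in_body_ext p x x' : (forall n, x n = x' n) -> in_body p x -> in_body p x'.
Proof. move=> E H n; have := H n; by rewrite /initseg (eq_mkseq E). Qed.

Lemma Phi_comp p : comp_fun Phip p (PhiN p).
Proof. move=> n; rewrite -den_Phi; exact: den_ok mfree_Phi. Qed.

Lemma Phi_dom p : tree_name p -> pdom FindHS_Sigma01 (PhiN p).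
Proof.
move=> Hp; case: (exists_sol Hp) => h [Hh Hin].
exists h; split; first exact: open_Phi.
by split; [exists h | split].
Qed.

Lemma red_sTC : weih_le sTC_NN FindHS_Sigma01.
Proof.
exists Phip, Psip => G HG p [q0 [Hp _]].
have HF := HG _ (Phi_dom Hp); case: HF => _ [_ [Hh Hin]].
set f := G (PhiN p) in Hh Hin *.
exists (PhiN p), (PsiN (pairB p f)); split; first exact: Phi_comp.
split; first by move=> n; rewrite -den_Psi; exact: den_ok mfree_Psi.
have E0 : PsiN (pairB p f) 0 = odd (f 0) by rewrite /PsiN -(pairB_odd p f 0).
case: (core Hp Hh Hin) => Hodd Hev.
split => //; split; first by rewrite E0 leq_b1.
split.
- rewrite E0 => H0 x; apply: Hev; by case: (odd (f 0)) H0.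
- rewrite E0 => H1; have Ho : odd (f 0) by case: (odd (f 0)) H1.
  case: (Hodd Ho) => Hsz Hb; apply: in_body_ext Hb => n.
  rewrite /tailB /PsiN /= -[(n.+1 + n.+1).+1]/((n.+1 + n.+1).+1) pairB_odd.
  by rewrite -[in RHS](code_decode ((f n.+1)./2)) hd_TLN.
Qed.

Lemma red_chi : weih_le chi_Pi11 FindHS_Sigma01.
Proof.
exists Phip, Psic => G HG p [q0 [Hp _]].
have HF := HG _ (Phi_dom Hp); case: HF => _ [_ [Hh Hin]].
set f := G (PhiN p) in Hh Hin *.
exists (PhiN p), (fun _ => (~~ odd (f 0) : nat)); split; first exact: Phi_comp.
split; first by move=> n; have := den_ok (pairB p f) [:: n] mfree_Psic; rewrite den_Psic -[pairB p f 1]/(pairB p f (0+0).+1) pairB_odd.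
case: (core Hp Hh Hin) => Hodd Hev.
split => //; case Ho: (odd (f 0)) => /=.
- have [_ Hb] := Hodd Ho.
  split; split => // H; [exfalso; exact: H _ Hb | move=> HW; exact: HW _ Hb].
- have HW : wellfounded_tree p by move=> x; apply: Hev; rewrite Ho.
  by split; split.
Qed.

Definition pfun (sig : seq nat) (M : nat) : Baire := fun n =>
  if n < size sig then nth 0 sig n else
  let k := n - size sig in
  match dec k with [:: a; b] => if (M <= a) && (a < b) then k.+1 else 0 | _ => 0 end.

Lemma code_inj2 s t : code s = code t -> s = t.
Proof. exact: code_inj. Qed.

Definition ventry M v := v = 0 \/ exists a b, M <= a /\ a < b /\ v = (code [:: a; b]).+1.
Definition Ext sig M sig' M' := take (size sig) sig' = sig /\ M <= M' /\
  forall i, size sig <= i -> i < size sig' -> ventry M (nth 0 sig' i).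

Lemma ventry_mono M M' v : M <= M' -> ventry M' v -> ventry M v.
Proof. move=> H [->|[a [b [H1 [H2 ->]]]]]; [by left | right; exists a, b; split => //; exact: leq_trans H1]. Qed.

Lemma Ext_refl sig M : Ext sig M sig M.
Proof. split; first exact: take_size. split => // i H1 H2; by move: (leq_ltn_trans H1 H2); rewrite ltnn. Qed.

Lemma Ext_size sig M sig' M' : Ext sig M sig' M' -> size sig <= size sig'.
Proof. by case=> E _; rewrite -{1}E size_take_min geq_minr. Qed.

Lemma Ext_nth sig M sig' M' i : Ext sig M sig' M' -> i < size sig -> nth 0 sig' i = nth 0 sig i.
Proof. by case=> E _ Hi; rewrite -E nth_take. Qed.

Lemma Ext_trans s1 M1 s2 M2 s3 M3 : Ext s1 M1 s2 M2 -> Ext s2 M2 s3 M3 -> Ext s1 M1 s3 M3.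
Proof.
move=> H12 H23; have Hs12 := Ext_size H12; have Hs23 := Ext_size H23.
case: (H12) => E12 [HM12 Hv12]; case: (H23) => E23 [HM23 Hv23].
split; first by rewrite -(@take_takel _ (size s1) (size s2)) // E23.
split; first exact: leq_trans HM23.
move=> i Hi1 Hi3; case: (ltnP i (size s2)) => Hi2.
- rewrite (Ext_nth H23 Hi2); exact: Hv12.
- apply: ventry_mono HM12 _; exact: Hv23.
Qed.

Lemma pfun_prefix sig M sig' M' i : Ext sig M sig' M' -> i < size sig -> pfun sig' M' i = nth 0 sig i.
Proof.
move=> H Hi; have Hs := Ext_size H.
by rewrite /pfun (leq_trans Hi Hs) (Ext_nth H Hi).
Qed.

Lemma pfun_entry sig M i : size sig <= i -> ventry M (pfun sig M i).
Proof.
move=> Hi; rewrite /pfun ltnNge Hi /=.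
case E: (dec (i - size sig)) => [|a [|b [|c l]]]; try by left.
case: ifP => [/andP [H1 H2]|]; last by left.
right; exists a, b; split => //; split => //; by rewrite -E code_decode.
Qed.

Lemma Ext_mk sig M L M' : size sig <= L -> M <= M' -> Ext sig M (mkseq (pfun sig M) L) M'.
Proof.
move=> HL HM; split.
- apply: (@eq_from_nth _ 0); first by rewrite size_takel // size_mkseq.
  move=> i; rewrite size_takel ?size_mkseq // => Hi.
  by rewrite nth_take // nth_mkseq ?(leq_trans Hi HL) // /pfun Hi.
- split => // i Hi1; rewrite size_mkseq => Hi2; rewrite nth_mkseq //; exact: pfun_entry.
Qed.

Lemma agree_mk sig M L M'' s2 M2 i : Ext (mkseq (pfun sig M) L) M'' s2 M2 -> i < L ->
  pfun s2 M2 i = pfun sig M i.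
Proof. move=> H Hi; rewrite (pfun_prefix H) ?size_mkseq // nth_mkseq //. Qed.

Lemma enum_pfun sig M s : Ext [::] 0 sig M -> enumerated (pfun sig M) s ->
  exists a b, s = [:: a; b] /\ a < b.
Proof.
move=> [_ [_ Hv]] [n Hn]; move: Hn; rewrite /pfun; case: ltnP => Hs.
- case: (Hv n (leq0n _) Hs) => [->|[a [b [_ [Hab E]]]]] // ; rewrite E => Es; have Es2 := code_inj2 (succn_inj Es).
  by exists a, b; rewrite -Es2.
- case E: (dec (n - size sig)) => [|a [|b [|c l]]] //; case: ifP => // /andP [_ Hab] [Ek].
  exists a, b; split => //; apply: code_inj2; by rewrite -E code_decode Ek.
Qed.

Lemma dom_pfun sig M : Ext [::] 0 sig M -> pdom FindHS_Sigma01 (pfun sig M).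
Proof.
move=> Hv; pose h n := M + n.
have Hall : forall g, strinc g -> in_open (pfun sig M) (h \o g).
  move=> g Hg; split; first by move=> n; rewrite /h /= ltn_add2l.
  exists [:: h (g 0); h (g 1)]; split => //.
  exists (size sig + code [:: h (g 0); h (g 1)]); rewrite /pfun ltnNge leq_addr addKn CodeSeq.codeK /=.
  by rewrite /h leq_addr ltn_add2l (Hg 0).
have Hh : strinc h by move=> n; rewrite /h ltn_add2l.
exists h; split.
- move=> s Hs; case: (enum_pfun Hv Hs) => a [b [-> Hab]]; by rewrite /= Hab.
- split; first by exists h; split; [split => //; left | apply: in_open_ext (Hall id (fun n => ltnSn n))].
  split; first by split => //; left.
  by apply: in_open_ext (Hall id (fun n => ltnSn n)).
Qed.

Lemma nth_sumn l n : nth 0 l n <= sumn l.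
Proof.
elim: l n => [|x l IH] [|n] //=; first exact: leq_addr.
apply: leq_trans (IH n) _; exact: leq_addl.
Qed.

Lemma nbr_bound s'' M'' s2 M2 v w : Ext s'' M'' s2 M2 -> v < M'' ->
  enumerated (pfun s2 M2) [:: v; w] -> w < sumn s''.
Proof.
move=> H HvM [n Hn]; have Hs := Ext_size H.
have Hw : w < code [:: v; w] by have := CodeSeq.ltn_code [:: v; w]; case/and3P.
case: (ltnP n (size s'')) => Hn1.
- move: Hn; rewrite (pfun_prefix H Hn1) => Hn.
  apply: (leq_trans Hw); apply: (leq_trans (leqnSn _)); rewrite -Hn; exact: nth_sumn.
- have Hv : ventry M'' (pfun s2 M2 n).
    case: (ltnP n (size s2)) => Hn2.
    + case: H => _ [_ Hve]; move: (Hve n Hn1 Hn2); by rewrite /pfun Hn2.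
    + apply: ventry_mono (pfun_entry _ Hn2); by case: H => _ [].
  move: Hv; rewrite Hn => -[//|[a [b [Ha [_ Ee]]]]]; have := code_inj2 (succn_inj Ee) => -[Ea _].
  by move: HvM; rewrite ltnNge Ea Ha.
Qed.

Definition cb (b : nat) : Baire := fun n => if n is 0 then b else 0.
Definition conv e b sig M v := reval (pairB (pfun sig M) (cb b)) e [:: 0] v.

Lemma half_le i : i./2 <= i.
Proof. by rewrite -{2}(odd_double_half i) -addnn addnA leq_addl. Qed.

Lemma pairB_agree p p' c N : agree p p' N -> agree (pairB p c) (pairB p' c) N.
Proof.
move=> H i Hi; rewrite /pairB; case: (odd i) => //; apply: H; exact: leq_ltn_trans (half_le i) Hi.
Qed.

Lemma stage e b sig M : exists sig' M', Ext sig M sig' M' /\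
  ((forall s2 M2, Ext sig' M' s2 M2 -> forall v, ~ conv e b s2 M2 v) \/
   (exists v B, forall s2 M2, Ext sig' M' s2 M2 -> conv e b s2 M2 v /\
       forall w, enumerated (pfun s2 M2) [:: v; w] -> w < B)).
Proof.
case: (classic (exists s1 M1 v, Ext sig M s1 M1 /\ conv e b s1 M1 v)).
- case=> s1 [M1 [v [H1 Hc]]]; case: (use_r Hc) => N HN.
  pose L := maxn N (size s1); pose s'' := mkseq (pfun s1 M1) L; pose M'' := maxn M1 v.+1.
  have Hx : Ext s1 M1 s'' M'' by apply: Ext_mk; [exact: leq_maxr | exact: leq_maxl].
  exists s'', M''; split; first exact: Ext_trans H1 Hx.
  right; exists v, (sumn s'') => s2 M2 H2; split.
  + apply: HN; apply: pairB_agree => i Hi; apply: (agree_mk H2).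
    exact: leq_trans Hi (leq_maxl _ _).
  + move=> w Hw; apply: nbr_bound H2 _ Hw; exact: leq_maxr.
- move=> Hno; exists sig, M; split; first exact: Ext_refl.
  left => s2 M2 H2 v Hc; apply: Hno; by exists s2, M2, v.
Qed.

Lemma neg_red : ~ weih_le FindHS_Sigma01 chi_Pi11.
Proof.
case=> ePhi [ePsi H].
pose bitf q : nat := if excluded_middle_informative (wellfounded_tree q) then 1 else 0.
pose G q := cb (bitf q).
have HG : realizes G chi_Pi11.
  move=> q [q0 [Hq _]]; split => //; rewrite /G /cb /bitf.
  by case: excluded_middle_informative => Hw; split; split.
case: (stage ePsi 0 [::] 0) => s1 [M1 [E1 S1]].
case: (stage ePsi 1 s1 M1) => s2 [M2 [E2 S2]].
have Hv : Ext [::] 0 s2 M2 := Ext_trans E1 E2.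
case: (H G HG _ (dom_pfun Hv)) => q [r [_ [Hr HF]]].
case: HF => _ [_ [Hh Hin]].
have Hall := homog_all Hh Hin; have Hrs : strinc r by case: Hh.
have contra : forall b' s' M', Ext s' M' s2 M2 -> bitf q = b' ->
    ((forall s3 M3, Ext s' M' s3 M3 -> forall v, ~ conv ePsi b' s3 M3 v) \/
     (exists v B, forall s3 M3, Ext s' M' s3 M3 -> conv ePsi b' s3 M3 v /\
       forall w, enumerated (pfun s3 M3) [:: v; w] -> w < B)) -> False.
  move=> b' s' M' Hx Eb [Hl|[v [B HB]]].
  - by apply: (Hl _ _ Hx (r 0)); rewrite /conv -Eb; apply: Hr.
  - case: (HB _ _ Hx) => Hc Hnb.
    have Er : r 0 = v by apply: (det_r (Hr 0)); rewrite /G Eb.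
    pose g k := if k is 0 then 0 else B + k.
    have Hg : strinc g by case=> [|k] /=; rewrite ?addn1 ?addnS.
    case: (Hall g Hg) => _ [s [Hs Es]].
    case: (enum_pfun Hv Hs) => a [b [Esab _]].
    move: Es; rewrite Esab /= /initseg /mkseq /= => -[Ea Eb2].
    have Hen : enumerated (pfun s2 M2) [:: v; r (B + 1)] by rewrite -Er -Ea -Eb2 -Esab.
    have H2 := Hnb _ Hen.
    have := strinc_ge (B + 1) Hrs; rewrite addn1 => H1.
    by move: H2; rewrite addn1 => H2; move: (ltn_trans H1 H2); rewrite ltnn.
have : bitf q = 0 \/ bitf q = 1 by rewrite /bitf; case: excluded_middle_informative; [right|left].
case=> Eb.
- exact: (contra 0 s1 M1 E2 Eb S1).
- exact: (contra 1 s2 M2 (Ext_refl s2 M2) Eb S2).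
Qed.


Theorem mainTheorem11 :
  weih_le sTC_NN FindHS_Sigma01 /\ weih_lt chi_Pi11 FindHS_Sigma01.
Proof.
split; first exact: red_sTC.
split; [exact: red_chi | exact: neg_red].
Qed.
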